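(* Let $\mathcal{V}$ be a non-trivial quantale and $\mathsf{F}\colon\mathbf{Set}\to\mathbf{Set}$ a functor. The monotone map $\mathsf{I}\colon\mathbf{Lax}(\mathsf{F})\to\mathbf{Lift}(\mathsf{F})_{\mathsf{I}}$, sending a lax extension to its induced lifting, is order-reflecting and right adjoint to the monotone map $\widehat{\mathsf{F}}^{\mathsf{M}\mathsf{P}(-)}\colon\mathbf{Lift}(\mathsf{F})_{\mathsf{I}}\to\mathbf{Lax}(\mathsf{F})$ sending a lifting $\overline{\mathsf{F}}$ to the Kantorovich extension of $\mathsf{F}$ with respect to the class of all monotone predicate liftings compatible with $\overline{\mathsf{F}}$.
   Context: A quantale $(\mathcal{V},\otimes,k)$ is a complete lattice with commutative monoid structure, each $u\otimes-$ preserving joins, $\hom(u,-)$ its right adjoint; non-trivial: $\bot\ne\top$. $\mathcal{V}$-categories $(X,a)$: $k\le a(x,x)$, $a(x,y)\otimes a(y,z)\le a(x,z)$; $\mathcal{V}$-functors: $a(x,y)\le b(f x,f y)$; initial $\mathcal{V}$-functors: equality; category $\mathbf{Cat}(\mathcal{V})$. $\mathcal{V}$-relations $r\colon X\nrightarrow Y$ are maps $X\times Y\to\mathcal{V}$, composed by $(s\cdot r)(x,z)=\bigvee_y r(x,y)\otimes s(y,z)$, with converse $r^\circ(y,x)=r(x,y)$, pointwise order, functions viewed as relations with value $k$ on the graph and $\bot$ elsewhere; $(r\multimap s)(z,y)=\bigwedge_x\hom(s(x,z),r(x,y))$ for $r\colon X\nrightarrow Y$, $s\colon X\nrightarrow Z$.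 A lax extension $\widehat{\mathsf{F}}$ of $\mathsf{F}$ maps $r\colon X\nrightarrow Y$ to $\widehat{\mathsf{F}}r\colon\mathsf{F}X\nrightarrow\mathsf{F}Y$ with (L1) monotonicity, (L2) $\widehat{\mathsf{F}}s\cdot\widehat{\mathsf{F}}r\le\widehat{\mathsf{F}}(s\cdot r)$, (L3) $\mathsf{F}f\le\widehat{\mathsf{F}}f$, $(\mathsf{F}f)^\circ\le\widehat{\mathsf{F}}(f^\circ)$; its induced lifting sends $(X,a)$ to $(\mathsf{F}X,\widehat{\mathsf{F}}a)$. $\mathbf{Lax}(\mathsf{F})$: lax extensions ordered pointwise. A lifting $\overline{\mathsf{F}}$ of $\mathsf{F}$ is a functor on $\mathbf{Cat}(\mathcal{V})$ with $|\overline{\mathsf{F}}-|=\mathsf{F}|-|$; $\mathbf{Lift}(\mathsf{F})_{\mathsf{I}}$: liftings preserving initial morphisms, ordered by $\overline{\mathsf{F}}\le\overline{\mathsf{F}}'$ iff the structure of $\overline{\mathsf{F}}(X,a)$ is pointwise below that of $\overline{\mathsf{F}}'(X,a)$ for all $(X,a)$. A $\kappa$-ary $\mathcal{V}$-valued predicate lifting is a natural transformation $\lambda\colon\mathbf{Set}(-,\mathcal{V}^\kappa)\to\mathbf{Set}(\mathsf{F}-,\mathcal{V})$, equivalently (identifying $f\colon X\to\mathcal{V}^\kappa$ with the relation $\kappa\nrightarrow X$, $(i,x)\mapsto f(x)(i)$, and maps $\mathsf{F}X\to\mathcal{V}$ with relations $1\nrightarrow\mathsf{F}X$) a natural family of maps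 from relations $\kappa\nrightarrow X$ to relations $1\nrightarrow\mathsf{F}X$; monotone if components are monotone pointwise. $\lambda$ is compatible with $\overline{\mathsf{F}}$ if $\lambda_{|X|}(f)\colon\overline{\mathsf{F}}X\to(\mathcal{V},\hom)$ is a $\mathcal{V}$-functor for every $\mathcal{V}$-functor $f\colon X\to\mathcal{V}^\kappa$ (where $\mathcal{V}^\kappa$ has structure $[f,g]=\bigwedge_i\hom(f(i),g(i))$). For a class $\Lambda$ of monotone predicate liftings, the Kantorovich extension (a lax extension of $\mathsf{F}$) is $\widehat{\mathsf{F}}^\Lambda r=\bigwedge_{\lambda\in\Lambda}\bigwedge_{g\colon\kappa\nrightarrow X}\lambda(r\cdot g)\multimap\lambda(g)$. *)

(* Defs.v *)
Set Implicit Arguments.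

Record quantale := Quantale {
  qcar :> Type;
  qle : qcar -> qcar -> Prop;
  qle_refl : forall x, qle x x;
  qle_trans : forall x y z, qle x y -> qle y z -> qle x z;
  qle_antisym : forall x y, qle x y -> qle y x -> x = y;
  qsup : (qcar -> Prop) -> qcar;
  qsup_ub : forall (S : qcar -> Prop) x, S x -> qle x (qsup S);
  qsup_least : forall (S : qcar -> Prop) y, (forall x, S x -> qle x y) -> qle (qsup S) y;
  qten : qcar -> qcar -> qcar;
  qk : qcar;
  qten_assoc : forall x y z, qten x (qten y z) = qten (qten x y) z;
  qten_comm : forall x y, qten x y = qten y x;
  qten_k : forall x, qten qk x = x;
  qten_sup : forall u (S : qcar -> Prop),
      qten u (qsup S) = qsup (fun v => exists x, S x /\ v = qten u x)
}.

Arguments qle {q}.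
Arguments qsup {q}.
Arguments qten {q}.
Arguments qk {q}.

Definition qbot (V : quantale) : V := qsup (fun _ => False).
Definition qtop (V : quantale) : V := qsup (fun _ => True).
Definition qinf {V : quantale} (S : V -> Prop) : V :=
  qsup (fun x => forall y, S y -> qle x y).
(** hom(u,-) : the right adjoint of u (x) - *)
Definition qhom {V : quantale} (u v : V) : V := qsup (fun w => qle (qten u w) v).

Definition nontrivial (V : quantale) : Prop := qbot V <> qtop V.

Record setfunctor := SetFunctor {
  Fob :> Type -> Type;
  Fmap : forall X Y : Type, (X -> Y) -> Fob X -> Fob Y;
  Fmap_id : forall X (t : Fob X), Fmap (fun x : X => x) t = t;
  Fmap_comp : forall X Y Z (f : X -> Y) (g : Y -> Z) (t : Fob X),
      Fmap g (Fmap f t) = Fmap (fun x => g (f x)) t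
}.
Arguments Fmap {s X Y}.

Definition vrel (V : quantale) (X Y : Type) := X -> Y -> V.

(** [vseq r s] is the composite  s . r  of r : X -/-> Y and s : Y -/-> Z *)
Definition vseq {V : quantale} {X Y Z : Type} (r : vrel V X Y) (s : vrel V Y Z)
  : vrel V X Z :=
  fun x z => qsup (fun v => exists y, v = qten (r x y) (s y z)).

Definition vconv {V : quantale} {X Y : Type} (r : vrel V X Y) : vrel V Y X :=
  fun y x => r x y.

(** a function as a V-relation: k on the graph, bottom elsewhere *)
Definition vgraph (V : quantale) {X Y : Type} (f : X -> Y) : vrel V X Y :=
  fun x y => qsup (fun v => f x = y /\ v = qk).

Definition vle {V : quantale} {X Y : Type} (r r' : vrel V X Y) : Prop :=
  forall x y, qle (r x y) (r' x y).

Definition vimp {V : quantale} {X Y Z : Type} (r : vrel V X Y) (s : vrel V X Z)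
  : vrel V Z Y :=
  fun z y => qinf (fun v => exists x, v = qhom (s x z) (r x y)).

Definition is_vcat {V : quantale} {X : Type} (a : vrel V X X) : Prop :=
  (forall x, qle qk (a x x)) /\
  (forall x y z, qle (qten (a x y) (a y z)) (a x z)).

Definition vfunctor {V : quantale} {X Y : Type} (a : vrel V X X) (b : vrel V Y Y)
  (f : X -> Y) : Prop :=
  forall x y, qle (a x y) (b (f x) (f y)).

Definition vinitial {V : quantale} {X Y : Type} (a : vrel V X X) (b : vrel V Y Y)
  (f : X -> Y) : Prop :=
  forall x y, a x y = b (f x) (f y).

Definition vhomstr (V : quantale) : vrel V V V := fun u v => qhom u v.
Definition vpow (V : quantale) (kappa : Type) : vrel V (kappa -> V) (kappa -> V) :=
  fun f g => qinf (fun v => exists i, v = qhom (f i) (g i)).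

Definition laxstr (V : quantale) (F : setfunctor) :=
  forall X Y : Type, vrel V X Y -> vrel V (F X) (F Y).

Definition is_laxext {V : quantale} {F : setfunctor} (L : laxstr V F) : Prop :=
  (forall X Y (r r' : vrel V X Y), vle r r' -> vle (L X Y r) (L X Y r')) /\
  (forall X Y Z (r : vrel V X Y) (s : vrel V Y Z),
      vle (vseq (L X Y r) (L Y Z s)) (L X Z (vseq r s))) /\
  (forall X Y (f : X -> Y),
      vle (vgraph V (Fmap (s := F) f)) (L X Y (vgraph V f)) /\
      vle (vconv (vgraph V (Fmap (s := F) f))) (L Y X (vconv (vgraph V f)))).

Definition laxext_le {V : quantale} {F : setfunctor} (L L' : laxstr V F) : Prop :=
  forall X Y (r : vrel V X Y), vle (L X Y r) (L' X Y r).

(** * Liftings of F to Cat(V): on objects, a structure on F X for every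
    structure a on X (only its values on V-categories matter); on morphisms
    the lifting acts as F. *)
Definition liftstr (V : quantale) (F : setfunctor) :=
  forall X : Type, vrel V X X -> vrel V (F X) (F X).

Definition is_lifting {V : quantale} {F : setfunctor} (Lb : liftstr V F) : Prop :=
  (forall X (a : vrel V X X), is_vcat a -> is_vcat (Lb X a)) /\
  (forall X Y (a : vrel V X X) (b : vrel V Y Y) (f : X -> Y),
      is_vcat a -> is_vcat b -> vfunctor a b f ->
      vfunctor (Lb X a) (Lb Y b) (Fmap (s := F) f)).

Definition preserves_initial {V : quantale} {F : setfunctor} (Lb : liftstr V F) : Prop :=
  forall X Y (a : vrel V X X) (b : vrel V Y Y) (f : X -> Y),
    is_vcat a -> is_vcat b -> vinitial a b f ->
    vinitial (Lb X a) (Lb Y b) (Fmap (s := F) f).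

Definition is_lifting_I {V : quantale} {F : setfunctor} (Lb : liftstr V F) : Prop :=
  is_lifting Lb /\ preserves_initial Lb.

Definition lift_le {V : quantale} {F : setfunctor} (Lb Lb' : liftstr V F) : Prop :=
  forall X (a : vrel V X X), is_vcat a -> vle (Lb X a) (Lb' X a).

Definition induced {V : quantale} {F : setfunctor} (L : laxstr V F) : liftstr V F :=
  fun X a => L X X a.

(** * Predicate liftings: relations kappa -/-> X  to  maps F X -> V
    (= relations 1 -/-> F X) *)
Definition predlift (V : quantale) (F : setfunctor) (kappa : Type) :=
  forall X : Type, vrel V kappa X -> (F X -> V).

Definition pl_natural {V : quantale} {F : setfunctor} {kappa : Type}
  (l : predlift V F kappa) : Prop :=
  forall X Y (h : X -> Y) (g : vrel V kappa Y) (t : F X),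
    l X (fun i x => g i (h x)) t = l Y g (Fmap h t).

Definition pl_monotone {V : quantale} {F : setfunctor} {kappa : Type}
  (l : predlift V F kappa) : Prop :=
  forall X (g g' : vrel V kappa X), vle g g' -> forall t, qle (l X g t) (l X g' t).

Definition pl_compatible {V : quantale} {F : setfunctor} {kappa : Type}
  (Lb : liftstr V F) (l : predlift V F kappa) : Prop :=
  forall X (a : vrel V X X) (g : vrel V kappa X),
    is_vcat a -> vfunctor a (@vpow V kappa) (fun x i => g i x) ->
    vfunctor (Lb X a) (vhomstr V) (l X g).

Definition plclass (V : quantale) (F : setfunctor) :=
  forall kappa : Type, predlift V F kappa -> Prop.

Definition MP {V : quantale} {F : setfunctor} (Lb : liftstr V F) : plclass V F :=
  fun kappa l => pl_natural l /\ pl_monotone l /\ pl_compatible Lb l.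

(** Kantorovich extension:
    F^Lambda r = /\_{lambda in Lambda} /\_{g : kappa -/-> X} lambda(r . g) -o lambda(g) *)
Definition kantorovich {V : quantale} {F : setfunctor} (Lam : plclass V F) : laxstr V F :=
  fun X Y r s t =>
    qinf (fun v => exists (kappa : Type) (l : predlift V F kappa) (g : vrel V kappa X),
      Lam kappa l /\
      v = vimp (fun (_ : unit) => l Y (vseq g r)) (fun (_ : unit) => l X g) s t).

(* Main.v *)
Require Import Defs.

Section Q.
Context {V : quantale}.

Lemma le_refl (a : V) : qle a a. Proof. apply qle_refl. Qed.
Lemma le_trans (a b c : V) : qle a b -> qle b c -> qle a c.
Proof. apply qle_trans. Qed.
Lemma sup_ub (S : V -> Prop) x : S x -> qle x (qsup S). Proof. apply qsup_ub. Qed.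
Lemma sup_least (S : V -> Prop) y : (forall x, S x -> qle x y) -> qle (qsup S) y.
Proof. apply qsup_least. Qed.

Lemma inf_lb (S : V -> Prop) y : S y -> qle (qinf S) y.
Proof. intro H. unfold qinf. apply sup_least. intros x Hx. apply Hx, H. Qed.
Lemma inf_glb (S : V -> Prop) x : (forall y, S y -> qle x y) -> qle x (qinf S).
Proof. intro H. unfold qinf. apply sup_ub. exact H. Qed.

Lemma bot_le (a : V) : qle (qbot V) a.
Proof. apply sup_least. intros x []. Qed.

Lemma ten_mono_r (c a b : V) : qle a b -> qle (qten c a) (qten c b).
Proof.
  intro H.
  assert (E : b = qsup (fun v => v = a \/ v = b)).
  { apply qle_antisym. apply sup_ub. right; reflexivity.
    apply sup_least. intros x [-> | ->]; [exact H | apply le_refl]. }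
  rewrite E, qten_sup. apply sup_ub. exists a. split; [left; reflexivity | reflexivity].
Qed.
Lemma ten_mono_l (c a b : V) : qle a b -> qle (qten a c) (qten b c).
Proof. intro H. rewrite (qten_comm _ a), (qten_comm _ b). apply ten_mono_r, H. Qed.

Lemma ten_k_r (a : V) : qten a qk = a.
Proof. rewrite qten_comm. apply qten_k. Qed.

Lemma ten_bot_r (a : V) : qten a (qbot V) = qbot V.
Proof. apply qle_antisym; [|apply bot_le]. unfold qbot. rewrite qten_sup.
  apply sup_least. intros x [y [[] _]]. Qed.
Lemma ten_bot_l (a : V) : qten (qbot V) a = qbot V.
Proof. rewrite qten_comm. apply ten_bot_r. Qed.

Lemma ten_sup_le_r (a : V) (S : V -> Prop) (d : V) :
  (forall x, S x -> qle (qten a x) d) -> qle (qten a (qsup S)) d.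
Proof. intro H. rewrite qten_sup. apply sup_least. intros v [x [Hx ->]]. apply H, Hx. Qed.
Lemma ten_sup_le_l (a : V) (S : V -> Prop) (d : V) :
  (forall x, S x -> qle (qten x a) d) -> qle (qten (qsup S) a) d.
Proof. intro H. rewrite qten_comm. apply ten_sup_le_r. intros x Hx. rewrite qten_comm. apply H, Hx. Qed.

Lemma hom_adj (u w v : V) : qle (qten u w) v <-> qle w (qhom u v).
Proof. split; intro H.
  - unfold qhom. apply sup_ub. exact H.
  - eapply le_trans. apply ten_mono_r, H. unfold qhom. apply ten_sup_le_r. intros x Hx; exact Hx.
Qed.
Lemma hom_eval (u v : V) : qle (qten u (qhom u v)) v.
Proof. apply hom_adj, le_refl. Qed.
Lemma hom_mono (a a' b b' : V) : qle a' a -> qle b b' -> qle (qhom a b) (qhom a' b').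
Proof. intros H1 H2. apply hom_adj. eapply le_trans. apply ten_mono_l, H1.
  eapply le_trans. apply hom_eval. exact H2. Qed.
Lemma k_l (a b c : V) : qle qk a -> qle (qten a b) c -> qle b c.
Proof. intros H1 H2. eapply le_trans; [|exact H2]. assert (E : qle (qten qk b) (qten a b)) by (apply ten_mono_l, H1). rewrite qten_k in E. exact E. Qed.
Lemma k_r (a b c : V) : qle qk a -> qle (qten b a) c -> qle b c.
Proof. intros H1 H2. apply (k_l a); auto. rewrite qten_comm; auto. Qed.
Lemma hom_k_le (a b : V) : qle qk a -> qle (qhom a b) b.
Proof. intro H. apply (k_l a); auto. apply hom_eval. Qed.
Lemma le_ten_k (a b : V) : qle qk b -> qle a (qten a b).
Proof. intro H. eapply le_trans; [|apply ten_mono_r, H]. rewrite ten_k_r. apply le_refl. Qed.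

Lemma graph_le {X Y} (f : X -> Y) x y (w : V) : (f x = y -> qle qk w) -> qle (vgraph V f x y) w.
Proof. intro H. apply sup_least. intros v [E ->]. apply H, E. Qed.
Lemma graph_ge {X Y} (f : X -> Y) x : qle qk (vgraph V f x (f x)).
Proof. apply sup_ub. split; reflexivity. Qed.
Lemma graph_ten_le {X Y} (f : X -> Y) x y (w w' : V) :
  (f x = y -> qle w w') -> qle (qten (vgraph V f x y) w) w'.
Proof. intro H. unfold vgraph. apply ten_sup_le_l. intros v [E ->]. rewrite qten_k. apply H, E. Qed.
Lemma graph_ten_le' {X Y} (f : X -> Y) x y (w w' : V) :
  (f x = y -> qle w w') -> qle (qten w (vgraph V f x y)) w'.
Proof. intro H. rewrite qten_comm. apply graph_ten_le, H. Qed.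

Lemma vseq_ge {X Y Z} (r : vrel V X Y) (s : vrel V Y Z) x y z :
  qle (qten (r x y) (s y z)) (vseq r s x z).
Proof. apply sup_ub. exists y. reflexivity. Qed.
Lemma vseq_le {X Y Z} (r : vrel V X Y) (s : vrel V Y Z) x z w :
  (forall y, qle (qten (r x y) (s y z)) w) -> qle (vseq r s x z) w.
Proof. intro H. apply sup_least. intros v [y ->]. apply H. Qed.
Lemma vseq_assoc_le {K X Y Z} (g : vrel V K X) (r : vrel V X Y) (s : vrel V Y Z) i z :
  qle (vseq (vseq g r) s i z) (vseq g (vseq r s) i z).
Proof. apply vseq_le. intro y. apply ten_sup_le_l. intros v [x ->].
  rewrite <- qten_assoc. eapply le_trans; [apply ten_mono_r, (vseq_ge r s x y z) | apply vseq_ge].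
Qed.
End Q.

Section Lax.
Context {V : quantale} {F : setfunctor} (L : laxstr V F) (HL : is_laxext L).

Lemma LL1 {X Y} (r r' : vrel V X Y) : vle r r' -> vle (L X Y r) (L X Y r').
Proof. destruct HL as [H _]. apply H. Qed.
Lemma LL2 {X Y Z} (r : vrel V X Y) (s : vrel V Y Z) u v w :
  qle (qten (L X Y r u v) (L Y Z s v w)) (L X Z (vseq r s) u w).
Proof. destruct HL as [_ [H _]]. eapply le_trans; [apply vseq_ge | apply H]. Qed.
Lemma L3a {X Y} (f : X -> Y) u : qle qk (L X Y (vgraph V f) u (Fmap f u)).
Proof. destruct HL as [_ [_ H]]. eapply le_trans; [apply (graph_ge (Fmap f) u) | apply (proj1 (H X Y f))]. Qed.
Lemma L3b {X Y} (f : X -> Y) u : qle qk (L Y X (vconv (vgraph V f)) (Fmap f u) u).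
Proof. destruct HL as [_ [_ H]]. eapply le_trans; [apply (graph_ge (Fmap f) u) | apply (proj2 (H X Y f))]. Qed.

Lemma LA {X Y Z} (f : X -> Y) (s : vrel V Y Z) u w :
  qle (L X Z (fun x z => s (f x) z) u w) (L Y Z s (Fmap f u) w).
Proof. apply (k_l _ _ _ (L3b f u)). eapply le_trans; [apply LL2|]. apply LL1. intros y z.
  apply vseq_le. intro x. unfold vconv. apply graph_ten_le. intros <-. apply le_refl. Qed.
Lemma LB {X Y Z} (f : Y -> X) (s : vrel V Z X) w u :
  qle (L Z Y (fun z y => s z (f y)) w u) (L Z X s w (Fmap f u)).
Proof. apply (k_r _ _ _ (L3a f u)). eapply le_trans; [apply LL2|]. apply LL1. intros z x.
  apply vseq_le. intro y. apply graph_ten_le'. intros <-. apply le_refl. Qed.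
Lemma LC {X Y Z} (f : X -> Y) (s : vrel V Y Z) u w :
  qle (L Y Z s (Fmap f u) w) (L X Z (fun x z => s (f x) z) u w).
Proof. apply (k_l _ _ _ (L3a f u)). eapply le_trans; [apply LL2|]. apply LL1. intros x z.
  apply vseq_le. intro y. apply graph_ten_le. intros <-. apply le_refl. Qed.
Lemma LD {X Y Z} (f : Y -> X) (s : vrel V Z X) w u :
  qle (L Z X s w (Fmap f u)) (L Z Y (fun z y => s z (f y)) w u).
Proof. apply (k_r _ _ _ (L3b f u)). eapply le_trans; [apply LL2|]. apply LL1. intros z y.
  apply vseq_le. intro x. unfold vconv. apply graph_ten_le'. intros <-. apply le_refl. Qed.

Lemma L_refl {X} (a : vrel V X X) : (forall x, qle qk (a x x)) -> forall u, qle qk (L X X a u u).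
Proof. intros Ha u. pose proof (L3a (fun x : X => x) u) as H. rewrite Fmap_id in H.
  eapply le_trans; [exact H|]. apply LL1. intros x y. apply graph_le. intros <-. apply Ha. Qed.

Lemma induced_lift : is_lifting_I (induced L).
Proof.
  unfold induced. split; [split|].
  - intros X a [Ha1 Ha2]. split.
    + apply L_refl, Ha1.
    + intros u v w. eapply le_trans; [apply LL2|]. apply LL1. intros x z.
      apply vseq_le. intro y. apply Ha2.
  - intros X Y a b f _ _ Hf u v.
    eapply le_trans; [apply (LL1 _ (fun x x' => b (f x) (f x'))); exact Hf|].
    eapply le_trans; [apply (LA f (fun y x' => b y (f x')))|].
    apply (LB f b).
  - intros X Y a b f _ _ Hf u v. apply qle_antisym.
    + eapply le_trans; [apply (LL1 _ (fun x x' => b (f x) (f x')))|].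
      { intros x y. rewrite Hf. apply le_refl. }
      eapply le_trans; [apply (LA f (fun y x' => b y (f x')))|].
      apply (LB f b).
    + eapply le_trans; [apply (LD f b)|].
      eapply le_trans; [apply (LC f (fun y x' => b y (f x')))|].
      apply LL1. intros x y. rewrite Hf. apply le_refl.
Qed.
End Lax.

Definition cat_sum {V : quantale} {X Y} (r : vrel V X Y) : vrel V (X + Y) (X + Y) :=
  fun p q => match p, q with
  | inl x, inl x' => vgraph V (fun z => z) x x'
  | inr y, inr y' => vgraph V (fun z => z) y y'
  | inl x, inr y => r x y
  | inr _, inl _ => qbot V end.

Lemma cat_sum_vcat {V : quantale} {X Y} (r : vrel V X Y) : is_vcat (cat_sum r).
Proof.
  split.
  - intros [x|y]; unfold cat_sum; cbv beta iota; apply graph_ge.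
  - intros [x|y] [x'|y'] [x''|y'']; unfold cat_sum; cbv beta iota;
    first [ (rewrite ten_bot_l; apply bot_le) | (rewrite ten_bot_r; apply bot_le)
          | (apply graph_ten_le; intros <-; apply le_refl)
          | (apply graph_ten_le'; intros <-; apply le_refl) ].
Qed.

Section Kant.
Context {V : quantale} {F : setfunctor} (Lam : plclass V F).

Lemma K_le X Y r s t kappa (l : predlift V F kappa) g : Lam kappa l ->
  qle (@kantorovich V F Lam X Y r s t) (qhom (l X g s) (l Y (vseq g r) t)).
Proof. intro H. unfold kantorovich. eapply le_trans. apply inf_lb.
  exists kappa, l, g. split; [exact H | reflexivity].
  unfold vimp. apply inf_lb. exists tt. reflexivity. Qed.

Lemma K_ge X Y r s t (w : V) :
  (forall kappa l g, Lam kappa l -> qle w (qhom (l X g s) (l Y (vseq g r) t))) ->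
  qle w (@kantorovich V F Lam X Y r s t).
Proof. intro H. apply inf_glb. intros y [kappa [l [g [Hl ->]]]]. unfold vimp.
  apply inf_glb. intros y [[] ->]. apply H, Hl. Qed.

Hypothesis HLam : forall kappa l, Lam kappa l -> pl_natural l /\ pl_monotone l.

Lemma K_lax : is_laxext (kantorovich Lam).
Proof.
  split; [|split].
  - intros X Y r r' H s t. apply K_ge. intros kappa l g Hl.
    eapply le_trans; [apply (K_le X Y r s t kappa l g Hl)|].
    apply hom_mono; [apply le_refl|]. apply (proj2 (HLam _ _ Hl)).
    intros i y. apply vseq_le. intro x. eapply le_trans; [apply ten_mono_r, H | apply vseq_ge].
  - intros X Y Z r s u w. apply vseq_le. intro v. apply K_ge. intros kappa l g Hl.
    apply (proj1 (hom_adj _ _ _)). rewrite qten_assoc. eapply le_trans. apply ten_mono_l.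
    eapply le_trans. apply ten_mono_r, (K_le X Y r u v kappa l g Hl). apply hom_eval.
    eapply le_trans. apply ten_mono_r, (K_le Y Z s v w kappa l (vseq g r) Hl).
    eapply le_trans. apply hom_eval. apply (proj2 (HLam _ _ Hl)). intros i z. apply vseq_assoc_le.
  - intros X Y f. split.
    + intros u t. apply graph_le. intros <-. apply K_ge. intros kappa l g Hl.
      destruct (HLam _ _ Hl) as [Hnat Hmono].
      apply (proj1 (hom_adj _ _ _)). rewrite ten_k_r. rewrite <- Hnat. apply Hmono. intros i x.
      eapply le_trans; [|apply (vseq_ge g (vgraph V f) i x (f x))].
      apply le_ten_k, graph_ge.
    + intros t u. unfold vconv at 1. apply graph_le. intros <-. apply K_ge. intros kappa l g Hl.
      destruct (HLam _ _ Hl) as [Hnat Hmono].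
      apply (proj1 (hom_adj _ _ _)). rewrite ten_k_r. rewrite <- Hnat. apply Hmono. intros i x.
      eapply le_trans; [|apply (vseq_ge g (vconv (vgraph V f)) i (f x) x)].
      apply le_ten_k. apply (graph_ge f x).
Qed.
End Kant.

Definition yon {V : quantale} {F : setfunctor} (L : laxstr V F) (X : Type) (s : F X)
  : predlift V F X := fun Z h u => L X Z h s u.

Lemma yon_MP {V : quantale} {F : setfunctor} (Lb : liftstr V F) (L : laxstr V F)
  (HL : is_laxext L) (HLb : lift_le Lb (induced L)) (X : Type) (s : F X) :
  MP Lb (yon L X s).
Proof.
  split; [|split].
  - intros Z W phi G t. unfold yon. apply qle_antisym; [apply (LB L HL phi G) | apply (LD L HL phi G)].
  - intros Z g g' H t. unfold yon. apply (LL1 L HL), H.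
  - intros Z a g Ha Hf u u'. unfold vhomstr, yon. apply (proj1 (hom_adj _ _ _)).
    eapply le_trans. apply ten_mono_r. apply (HLb Z a Ha).
    unfold induced. eapply le_trans. apply (LL2 L HL). apply (LL1 L HL). intros i z'.
    apply vseq_le. intro z. apply (proj2 (hom_adj _ _ _)). eapply le_trans. apply Hf.
    unfold vpow. apply inf_lb. exists i. reflexivity.
Qed.

Theorem theorem6 (V : quantale) (F : setfunctor) :
  nontrivial V ->
  (forall L : laxstr V F, is_laxext L -> is_lifting_I (induced L)) /\
  (forall L L' : laxstr V F, is_laxext L -> is_laxext L' ->
      laxext_le L L' -> lift_le (induced L) (induced L')) /\
  (forall Lb : liftstr V F, is_lifting_I Lb -> is_laxext (kantorovich (MP Lb))) /\
  (forall Lb Lb' : liftstr V F, is_lifting_I Lb -> is_lifting_I Lb' ->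
      lift_le Lb Lb' -> laxext_le (kantorovich (MP Lb)) (kantorovich (MP Lb'))) /\
  (forall L L' : laxstr V F, is_laxext L -> is_laxext L' ->
      lift_le (induced L) (induced L') -> laxext_le L L') /\
  (forall (Lb : liftstr V F) (L : laxstr V F), is_lifting_I Lb -> is_laxext L ->
      (laxext_le (kantorovich (MP Lb)) L <-> lift_le Lb (induced L))).
Proof.
  intros _. split; [|split; [|split; [|split; [|split]]]].
  - intros L HL. apply induced_lift, HL.
  - intros L L' _ _ H X a _. apply H.
  - intros Lb _. apply K_lax. intros kappa l [Hn [Hm _]]. split; assumption.
  - intros Lb Lb' _ _ Hle X Y r s t. apply K_ge. intros kappa l g [Hn [Hm Hc]].
    apply K_le. split; [exact Hn | split; [exact Hm|]].
    intros Z a g' Ha Hf u v. eapply le_trans. apply (Hle Z a Ha). apply Hc; assumption.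
  - intros L L' HL HL' Hle X Y r u v.
    pose (c := cat_sum r).
    change (qle (L X Y (fun x y => c (inl x) (inr y)) u v)
                (L' X Y (fun x y => c (inl x) (inr y)) u v)).
    eapply le_trans. apply (LA L HL inl (fun z y => c z (inr y))).
    eapply le_trans. apply (LB L HL inr c).
    eapply le_trans. apply (Hle (X + Y)%type c (cat_sum_vcat r)).
    eapply le_trans. apply (LD L' HL' inr c).
    apply (LC L' HL' inl (fun z y => c z (inr y))).
  - intros Lb L _ HL. split.
    + intros HK X a Ha u v. unfold induced. eapply le_trans; [|apply (HK X X a u v)].
      apply K_ge. intros kappa l g [Hnat [Hmono Hcomp]].
      assert (Hfun : vfunctor a (vpow V (kappa:=kappa)) (fun x i => vseq g a i x)).
      { intros z z'. unfold vpow. apply inf_glb. intros y [i ->].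
        apply (proj1 (hom_adj _ _ _)). apply ten_sup_le_l. intros w [x ->].
        rewrite <- qten_assoc. eapply le_trans; [apply ten_mono_r, (proj2 Ha) | apply vseq_ge]. }
      eapply le_trans. apply (Hcomp X a (vseq g a) Ha Hfun u v).
      unfold vhomstr. apply hom_mono; [|apply le_refl].
      apply Hmono. intros i x. eapply le_trans; [|apply (vseq_ge g a i x x)].
      apply le_ten_k, (proj1 Ha).
    + intros HLb X Y r s t.
      eapply le_trans. apply (K_le (MP Lb) X Y r s t X (yon L X s) (vgraph V (fun x => x))
                                (yon_MP Lb L HL HLb X s)).
      unfold yon. eapply le_trans.
      * apply hom_k_le. apply (L_refl L HL). intro x. apply (graph_ge (fun x : X => x) x).
      * apply (LL1 L HL). intros x y. apply vseq_le. intro x'. apply graph_ten_le.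
        intros <-. apply le_refl.
Qed.
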